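(* For every prime $p$, the polynomial $P_{2,p}(z)=\sum_{n=0}^{p-1}\left(\frac{-1}{2n-1}\binom{2n}{n}^2\bmod p\right)z^n\in\mathbb{F}_p[z]$ is separable over $\overline{\mathbb{F}_p}$; in particular $P_{2,p}$ and its derivative $P_{2,p}'$ have no common root.
   Context: The coefficients $\frac{-1}{2n-1}\binom{2n}{n}^2$ are integers, so their reduction mod $p$ makes sense. *)

(* Defs.v *)
From HB Require Import structures.
From mathcomp Require Import all_boot all_order all_algebra all_field.
Set Implicit Arguments. Unset Strict Implicit. Unset Printing Implicit Defensive.
Import Order.TTheory GRing.Theory Num.Theory.
Local Open Scope ring_scope.

(* The integer coefficient  -1/(2n-1) * binom(2n,n)^2  (exact division in int;
   for n = 0 this is (-1) %/ (-1) = 1). *)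
Definition coef2 (n : nat) : int :=
  ((- ('C(n.*2, n) ^ 2)%:Z) %/ ((n.*2)%:Z - 1))%Z.

Definition P2 (p : nat) : {poly 'F_p} := \poly_(n < p) (coef2 n)%:~R.

(* Main.v *)
Require Import Defs.
From HB Require Import structures.
From mathcomp Require Import all_boot all_order all_algebra all_field.
From mathcomp Require Import zify ring lra.
From Stdlib Require Import Classical.
Set Implicit Arguments. Unset Strict Implicit. Unset Printing Implicit Defensive.
Import Order.TTheory GRing.Theory Num.Theory.
Local Open Scope ring_scope.

Lemma cb_rec n : (n.+1 * 'C(n.+1.*2, n.+1) = 2 * n.*2.+1 * 'C(n.*2, n))%N.
Proof.
have -> : n.+1.*2 = (n.*2.+1).+1 by rewrite doubleS.
rewrite binS.
have -> : 'C(n.*2.+1, n) = 'C(n.*2.+1, n.+1).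
  rewrite -bin_sub; last by lia.
  congr 'C(_, _); lia.
have := mul_bin_diag n.*2.+1 n; rewrite /= => H.
rewrite mulnDr -H; lia.
Qed.

Lemma cb_dvd n : (n.*2.+1 %| 'C(n.+1.*2, n.+1))%N.
Proof.
have cop : coprime n.*2.+1 n.+1.
  rewrite -coprime_modl.
  have -> : (n.*2.+1 %% n.+1 = n)%N.
    have -> : (n.*2.+1 = 1 * n.+1 + n)%N by lia.
    by rewrite modnMDl modn_small.
  exact: coprimenS.
rewrite -(Gauss_dvdr _ cop) cb_rec.
by rewrite -mulnA mulnCA dvdn_mulr.
Qed.

Lemma coef2E m : coef2 m * ((m.*2)%:Z - 1) = - (('C(m.*2, m) ^ 2)%N%:Z).
Proof.
rewrite /coef2 divzK //.
case: m => [|n]; first by [].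
have -> : ((n.+1.*2)%:Z - 1 = (n.*2.+1)%N%:Z)%R.
  rewrite doubleS /=; lia.
rewrite dvdzE abszN !absz_nat.
by rewrite expnS dvdn_mulr // cb_dvd.
Qed.

Lemma coef2_rec n :
  ((n.+1 ^ 2)%N%:Z * coef2 n.+1 = 4 * (n.*2.+1)%:Z * ((n.*2)%:Z - 1) * coef2 n)%R.
Proof.
have nz : ((n.*2.+1)%:Z != 0)%R by [].
apply: (mulIf nz).
have e1 : ((n.+1.*2)%:Z - 1 = (n.*2.+1)%:Z)%R by rewrite doubleS; lia.
have eA := coef2E n.+1; rewrite e1 in eA.
have eB := coef2E n.
have H := cb_rec n.
set A := coef2 n.+1 in eA *; set B := coef2 n in eB *.
set c1 := 'C(_, n.+1) in H eA; set c0 := 'C(_, n) in H eB.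
set d := (n.*2)%:Z - 1 in eB *.
have -> : ((n.+1 ^ 2)%N%:Z * A * (n.*2.+1)%:Z = (n.+1 ^ 2)%N%:Z * (A * (n.*2.+1)%:Z))%R by ring.
have -> : (4 * (n.*2.+1)%:Z * d * B * (n.*2.+1)%:Z = 4 * (n.*2.+1)%:Z * (n.*2.+1)%:Z * (B * d))%R by ring.
rewrite eA eB.
have H2 : ((n.+1 * c1) ^ 2)%N%:Z = ((2 * n.*2.+1 * c0) ^ 2)%N%:Z by rewrite H.
rewrite !expnMn !PoszM in H2.
rewrite mulrN mulrN; congr (- _).
rewrite H2.
rewrite expnS expn1 PoszM.
ring.
Qed.
Section Ode.
Variable L : fieldType.
Variable P : {poly L}.
Hypothesis hrec : forall n : nat,
  (n.+1 ^ 2)%:R * P`_n.+1 = 4 * (n.*2.+1)%:R * ((n.*2)%:R - 1) * P`_n.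

Lemma ode : 'X * (P^`()^`() - (16:L)%:P * ('X * P^`()^`()) - (16:L)%:P * P^`())
   + P^`() + (4:L)%:P * P = 0.
Proof.
apply/polyP => i; rewrite coef0.
case: i => [|i].
  rewrite !coefD coefXM /= coefCM coef_deriv.
  have h := hrec 0; move/eqP: h; rewrite -subr_eq0 => /eqP h.
  rewrite -?addnn in h *; apply: (eq_trans _ h); ring.
rewrite !coefD coefXM /= !coefB !coefCM coefXM !coef_deriv.
have h := hrec i.+1; move/eqP: h; rewrite -subr_eq0 => /eqP h.
rewrite -?addnn in h *; apply: (eq_trans _ h).
case: i h => [|i] h /=.
  ring.

ring.
Qed.

Definition low (A : {poly L}) (k : nat) := forall i, (i < k)%N -> A`_i = 0.

Lemma lowW A k m : low A k -> (m <= k)%N -> low A m.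
Proof. by move=> h hm i hi; apply: h; apply: leq_trans hm. Qed.
Lemma lowD A B k : low A k -> low B k -> low (A + B) k.
Proof. by move=> ha hb i hi; rewrite coefD ha // hb // addr0. Qed.
Lemma lowC c A k : low A k -> low (c%:P * A) k.
Proof. by move=> ha i hi; rewrite coefCM ha // mulr0. Qed.
Lemma lowX A k : low A k -> low ('X * A) k.+1.
Proof. by move=> ha [|i] hi; rewrite coefXM //= ha. Qed.
Lemma lowd A k : low A k.+1 -> low A^`() k.
Proof. by move=> ha i hi; rewrite coef_deriv ha // mul0rn. Qed.

Variable p : nat.
Hypothesis hchar : forall n, (0 < n < p)%N -> n%:R != 0 :> L.
Hypothesis hsize : (size P <= p)%N.
Hypothesis hP0 : P`_0 != 0.

Lemma q_zero (Q : {poly L}) (x0 : L) :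
  (x0 * (1 - 16 * x0))%:P * Q^`()^`() + 'X * ((1 - 32 * x0)%:P * Q^`()^`()
   + 'X * ((-16)%:P * Q^`()^`()) + (-16)%:P * Q^`()) + (1 - 16 * x0)%:P * Q^`()
   + (4:L)%:P * Q = 0 ->
  Q`_0 = 0 -> Q`_1 = 0 -> x0 != 0 -> (size Q <= p)%N -> Q = 0.
Proof.
move=> E2 q0 q1 nx0 hsQ.
have step : forall k, low Q k.+2 -> (k.+2 < p)%N -> Q`_k.+2 = 0.
  move=> k hl hk.
  have h1 : low Q^`() k.+1 by apply: lowd.
  have h2 : low Q^`()^`() k by apply: lowd.
  have nz1 : (k.+1)%:R != 0 :> L.
    have hh : (0 < k.+1 < p)%N by rewrite (ltnW hk).
    exact: (hchar hh).
  have nz2 : (k.+2)%:R != 0 :> L.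
    have hh : (0 < k.+2 < p)%N by rewrite hk.
    exact: (hchar hh).
  have eQ'' : Q^`()^`()`_k = Q`_k.+2 * (k.+2)%:R * (k.+1)%:R.
    by rewrite !coef_deriv !mulr_natr.
  have t1 : ('X * ((-16)%:P * Q^`()^`()))`_k = 0.
    exact: (lowX (lowC (-16) h2) (ltnSn k)).
  have t2 : ((-16)%:P * Q^`())`_k = 0 by exact: (lowC (-16) h1 (ltnSn k)).
  have t3 : Q`_k = 0 by exact: (hl k (leqW (ltnSn k))).
  have t4 : Q`_k.+1 = 0 by exact: (hl k.+1 (ltnSn _)).
  have t5 : Q^`()`_k = 0 by exact: (h1 k (ltnSn _)).
  case: (eqVneq (1 - 16 * x0) 0) => he.
    have := congr1 (fun r : {poly L} => r`_k.+1) E2.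
    rewrite /= coef0 !coefD coefXM /= !coefD t1 t2 !coefCM he t4 eQ''.
    have hd : 1 - 32 * x0 != 0.
      move/eqP: he; rewrite subr_eq0 => /eqP h16.
      have -> : 1 - 32 * x0 = 1 - 2 * (16 * x0) by ring.
      rewrite -h16.
      have -> : (1:L) - 2 * 1 = -1 by ring.
      by rewrite oppr_eq0 oner_eq0.
    rewrite !(mulr0, mul0r, addr0, add0r) => /eqP.
    rewrite !mulf_eq0 (negbTE hd) (negbTE nz1) (negbTE nz2) /= !orbF.
    by move/eqP.
  have t6 : ('X * ((1 - 32 * x0)%:P * Q^`()^`() + 'X * ((-16)%:P * Q^`()^`())
      + (-16)%:P * Q^`()))`_k = 0.
    exact: (lowX (lowD (lowD (lowC _ h2) (lowW (lowX (lowC _ h2)) (leqnSn k)))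
      (lowW (lowC _ h1) (leqnSn k))) (ltnSn k)).
  have := congr1 (fun r : {poly L} => r`_k) E2.
  rewrite /= coef0 !coefD t6 !coefCM t5 t3 eQ''.
  have hc : x0 * (1 - 16 * x0) != 0 by rewrite mulf_neq0.
  rewrite !(mulr0, mul0r, addr0, add0r) => /eqP.
  rewrite !mulf_eq0 (negbTE nx0) (negbTE he) (negbTE nz1) (negbTE nz2) /= !orbF.
  by move/eqP.
have lowS : forall k, low Q k -> Q`_k = 0 -> low Q k.+1.
  move=> k hl hq i; rewrite ltnS leq_eqVlt => /orP[/eqP -> // | hi].
  exact: hl.
have all : forall k, (k <= p)%N -> low Q k.
  elim=> [|k IH] hk; first by move=> i.
  have hl := IH (ltnW hk).
  apply: lowS => //.
  case: k hk IH hl => [|[|j]] hk IH hl; [exact: q0 | exact: q1 | ].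
  exact: (step j hl hk).
apply/polyP => i; rewrite coef0.
case: (ltnP i p) => hi; first exact: (all p (leqnn p) i hi).
by apply: nth_default; apply: leq_trans hsQ hi.
Qed.

Lemma no_double_root x0 : P.[x0] = 0 -> P^`().[x0] = 0 -> False.
Proof.
move=> hr0 hr1.
have nx0 : x0 != 0.
  apply/eqP => hx; move: hr0; rewrite hx horner_coef0 => h; by move: hP0; rewrite h eqxx.
have [s es] : {s : {poly L} | s = 'X + x0%:P} by exists ('X + x0%:P).
have [Q eQ] : {Q : {poly L} | Q = P \Po s} by exists (P \Po s).
have ds : s^`() = 1 by rewrite es derivD derivX derivC addr0.
have hQ' : Q^`() = P^`() \Po s by rewrite eQ deriv_comp ds mulr1.
have hQ'' : Q^`()^`() = P^`()^`() \Po s by rewrite hQ' deriv_comp ds mulr1.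
have E : s * (Q^`()^`() - (16:L)%:P * (s * Q^`()^`()) - (16:L)%:P * Q^`())
   + Q^`() + (4:L)%:P * Q = 0.
  have := congr1 (fun r => r \Po s) ode.
  rewrite /= !comp_polyD !comp_polyM !comp_polyB !comp_polyM !comp_polyC comp_polyX ?comp_poly0.
  by rewrite -hQ' -hQ'' -eQ.
have E2 : (x0 * (1 - 16 * x0))%:P * Q^`()^`() + 'X * ((1 - 32 * x0)%:P * Q^`()^`()
   + 'X * ((-16)%:P * Q^`()^`()) + (-16)%:P * Q^`()) + (1 - 16 * x0)%:P * Q^`()
   + (4:L)%:P * Q = 0.
  rewrite -E es; ring.
have s0 : s.[0] = x0 by rewrite es hornerD hornerX hornerC add0r.
have q0 : Q`_0 = 0 by rewrite -horner_coef0 eQ horner_comp s0.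
have q1 : Q`_1 = 0.
  have := horner_coef0 Q^`(); rewrite coef_deriv mulr1n => <-.
  by rewrite hQ' horner_comp s0.
have sQ : (size Q <= p)%N.
  by rewrite eQ size_comp_poly2 // es size_XaddC.
have Q0 := q_zero E2 q0 q1 nx0 sQ.
have : P = Q \Po ('X - x0%:P) by rewrite eQ es comp_polyXaddC_K.
rewrite Q0 comp_poly0 => P0.
by move: hP0; rewrite P0 coef0 eqxx.
Qed.
End Ode.

Lemma exists_irr (F : fieldType) (n : nat) (g : {poly F}) :
  (size g <= n)%N -> (1 < size g)%N -> exists2 h : {poly F}, irreducible_poly h & h %| g.
Proof.
elim: n g => [|n IH] g hs hg; first by move: hs hg; rewrite leqn0 => /eqP ->.
case: (classic (irreducible_poly g)) => hi.
  by exists g => //; rewrite dvdpp.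
have [q [hq1 hqg hnq]] : exists q : {poly F}, [/\ size q != 1%N, q %| g & ~~ (q %= g)].
  apply: NNPP => hne; apply: hi; split => // q hq hqg.
  apply: NNPP => hn; apply: hne; exists q; split => //.
  by apply/negP.
have g0 : g != 0 by rewrite -size_poly_gt0 (ltnW hg).
have q0 : q != 0 by apply: contraNneq g0 => q0; move: hqg; rewrite q0 dvd0p.
have hlt : (size q < size g)%N.
  rewrite ltn_neqAle dvdp_leq // andbT.
  by rewrite dvdp_size_eqp.
have hq2 : (1 < size q)%N.
  by rewrite ltn_neqAle eq_sym hq1 /= size_poly_gt0.
have hsq : (size q <= n)%N by rewrite -ltnS (leq_trans hlt hs).
have [h hh hhq] := IH q hsq hq2.
by exists h => //; exact: dvdp_trans hhq hqg.
Qed.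

Section Main.
Variable p : nat.
Hypothesis hp : prime p.
Variable L : fieldType.
Variable f : {rmorphism 'F_p -> L}.

Let PL := map_poly f (P2 p).

Lemma coefPL n : PL`_n = if (n < p)%N then (coef2 n)%:~R else 0.
Proof.
rewrite /PL coef_map /P2 coef_poly.
case: ifP => _; [exact: rmorph_int | exact: rmorph0].
Qed.

Lemma pL : (p%:R : L) = 0.
Proof. rewrite -(rmorph_nat f) (pchar_Fp_0 hp); exact: rmorph0. Qed.

Lemma hcharL n : (0 < n < p)%N -> n%:R != 0 :> L.
Proof.
move=> /andP[h0 h1]; rewrite -(rmorph_nat f) fmorph_eq0.
by rewrite -(dvdn_pcharf (pchar_Fp hp)) gtnNdvd.
Qed.

Lemma intcast n : ((n%:Z)%:~R : L) = n%:R.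
Proof. exact: (esym (pmulrn 1 n)). Qed.

Lemma recL n : (n.+1 ^ 2)%:R * PL`_n.+1 = 4 * (n.*2.+1)%:R * ((n.*2)%:R - 1) * PL`_n.
Proof.
have e := congr1 (fun z : int => (z%:~R : L)) (coef2_rec n).
rewrite /= !intrM intrB !intcast in e.
have e4 : ((1 + (1 + (1 + 1)))%:R : L) = 4 by [].
rewrite e4 in e.
rewrite !coefPL.
case: (ltnP n.+1 p) => h.
  by rewrite (ltnW h).
case: (ltnP n p) => h2; last by rewrite !mulr0.
have hp1 : n.+1 = p by apply/eqP; rewrite eqn_leq h h2.
rewrite mulr0 -e hp1 natrX pL expr0n /= mul0r //.
Qed.

Lemma sizePL : (size PL <= p)%N.
Proof. by rewrite /PL size_map_poly size_poly. Qed.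

Lemma PL0 : PL`_0 != 0.
Proof.
rewrite coefPL prime_gt0 //.
have -> : coef2 0 = 1 by [].
exact: oner_neq0.
Qed.

Lemma noroot x : ~~ (root PL x && root PL^`() x).
Proof.
apply/negP => /andP[/rootP h0 /rootP h1].
exact: (no_double_root recL hcharL sizePL PL0 h0 h1).
Qed.
End Main.

Theorem mainTheorem15 (p : nat) (hp : prime p) :
  separable_poly (P2 p) /\
  (forall (L : fieldType) (f : {rmorphism 'F_p -> L}) (x : L),
      ~~ (root (map_poly f (P2 p)) x && root (map_poly f (P2 p)^`()) x)).
Proof.
have part2 : forall (L : fieldType) (f : {rmorphism 'F_p -> L}) (x : L),
      ~~ (root (map_poly f (P2 p)) x && root (map_poly f (P2 p)^`()) x).
  move=> L f x; rewrite -deriv_map; exact: (noroot hp f x).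
split => //.
rewrite unlock coprimep_def.
apply: NNPP => /negP hne.
set g := gcdp _ _ in hne.
have P0 : P2 p != 0.
  apply/eqP => h0; have := congr1 (fun q : {poly 'F_p} => q`_0) h0.
  rewrite /= coef0 /P2 coef_poly prime_gt0 //.
have g0 : g != 0 by rewrite gcdp_eq0 negb_and P0.
have hg : (1 < size g)%N by rewrite ltn_neqAle eq_sym hne size_poly_gt0.
have [h hh hhg] := exists_irr (leqnn (size g)) hg.
have [L _ [z hz _]] := irredp_FAdjoin hh.
have := part2 L (GRing.in_alg L) z.
have d1 : h %| P2 p by apply: dvdp_trans hhg (dvdp_gcdl _ _).
have d2 : h %| (P2 p)^`() by apply: dvdp_trans hhg (dvdp_gcdr _ _).
have m1 : map_poly (GRing.in_alg L) h %| map_poly (GRing.in_alg L) (P2 p) by rewrite dvdp_map.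
have m2 : map_poly (GRing.in_alg L) h %| map_poly (GRing.in_alg L) (P2 p)^`() by rewrite dvdp_map.
by rewrite (root_dvdp m1 hz) (root_dvdp m2 hz).
Qed.
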